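(* Let $\varepsilon>0$ be a constant and let $c_0>0$ be a sufficiently large constant (depending on $\varepsilon$). If $c_0/n\leq p\leq\ln(n)^7/n$, then with probability at least $9/10$ the random graph $G(n,p)$ has at most $1/p$ vertices of degree greater than $(1+\varepsilon)np$.
   Context: $G(n,p)$ is the random graph on $\{1,\dots,n\}$ with each possible edge present independently with probability $p$. *)

(* Defs.v *)
From HB Require Import structures.
From mathcomp Require Import all_boot all_order all_algebra.
From mathcomp Require Import all_classical all_reals all_analysis.
Set Implicit Arguments. Unset Strict Implicit. Unset Printing Implicit Defensive.
Import Order.TTheory GRing.Theory Num.Theory.
Local Open Scope ring_scope.

(* Possible edges of a simple graph on vertex set 'I_n = {0,...,n-1}:
   the 2-element subsets. A graph is a set of edges E with E \subset pairs n. *)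
Definition pairs (n : nat) : {set {set 'I_n}} := [set e : {set 'I_n} | #|e| == 2%N].

Definition deg (n : nat) (E : {set {set 'I_n}}) (v : 'I_n) : nat :=
  #|[set e in E | v \in e]|.

(* probability that G(n,p) has edge set exactly E (each of the pairs
   independently present with probability p) *)
Definition Gnp_weight (R : realType) (n : nat) (p : R) (E : {set {set 'I_n}}) : R :=
  p ^+ #|E| * (1 - p) ^+ (#|pairs n| - #|E|).

Definition Gnp_prob (R : realType) (n : nat) (p : R)
  (P : {set {set 'I_n}} -> bool) : R :=
  \sum_(E : {set {set 'I_n}} | (E \subset pairs n) && P E) Gnp_weight p E.

Definition high_deg (R : realType) (n : nat) (t : R) (E : {set {set 'I_n}})
  : {set 'I_n} := [set v | t < (deg E v)%:R].
Arguments Gnp_prob {R} n p P.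

(* Main.v *)
From HB Require Import structures.
From mathcomp Require Import all_boot all_order all_algebra.
From mathcomp Require Import all_classical all_reals all_analysis.
Import Order.TTheory GRing.Theory Num.Theory.
From mathcomp Require Import ring lra.
Require Import Defs.
Import Order.TTheory GRing.Theory Num.Theory.
Local Open Scope ring_scope.
Lemma sum_prod (R : realType) (T : finType) (P : {set T}) (p : R) (g : T -> R) :
  \sum_(E : {set T} | E \subset P)
     (p ^+ #|E| * (1-p) ^+ (#|P| - #|E|) * \prod_(e in E) g e)
  = \prod_(e in P) (p * g e + (1 - p)).
Proof.
pose F e := if e \in P then p * g e else 0.
pose G e := if e \in P then 1 - p else 1.
have -> : \prod_(e in P) (p * g e + (1 - p)) = \prod_e (F e + G e).
  rewrite big_mkcond; apply: eq_bigr => e _; rewrite /F /G.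
  by case: ifP => _; rewrite ?add0r.
rewrite bigA_distr.
rewrite [LHS]big_mkcond; apply: eq_big => // E _.
case: ifP => EP; last first.
  move/negbT: EP => /subsetPn [e eE eP].
  by rewrite (bigD1 e) //= eE /F (negbTE eP) mul0r.
rewrite [RHS](bigID (mem E)) /=.
under [X in _ = X * _]eq_bigr => e eE do rewrite eE /F (fintype.subsetP EP e eE).
under [X in _ = _ * X]eq_bigr => e eE do rewrite (negbTE eE) /G.
rewrite -big_mkcondr big_split /= !prodr_const.
have -> : #|[pred e | (e \notin E) && (e \in P)]| = #|P :\: E|.
  by apply: eq_card => e; rewrite !inE andbC.
rewrite (cardsDS EP).
by rewrite mulrAC.
Qed.

Lemma Gnp_total (R : realType) n (p : R) :
  \sum_(E : {set {set 'I_n}} | E \subset pairs n) Gnp_weight p E = 1.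
Proof.
transitivity (\sum_(E : {set {set 'I_n}} | E \subset pairs n)
   (p ^+ #|E| * (1-p) ^+ (#|pairs n| - #|E|) * \prod_(e in E) (fun _ => (1:R)) e)).
  by apply: eq_bigr => E _; rewrite big1_eq mulr1.
rewrite sum_prod big1 // => e _.
by rewrite mulr1 addrC subrK.
Qed.

Lemma Gnp_moment (R : realType) n (p a : R) (v : 'I_n) :
  \sum_(E : {set {set 'I_n}} | E \subset pairs n) Gnp_weight p E * a ^+ deg E v
  = (p * a + (1 - p)) ^+ #|[set e in pairs n | v \in e]|.
Proof.
transitivity (\sum_(E : {set {set 'I_n}} | E \subset pairs n)
   (p ^+ #|E| * (1-p) ^+ (#|pairs n| - #|E|) *
     \prod_(e in E) (if v \in e then a else 1))).
  apply: eq_bigr => E _; rewrite /Gnp_weight; congr (_ * _).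
  rewrite -big_mkcondr prodr_const /deg; congr (_ ^+ _).
  by apply: eq_card => e; rewrite !inE.
rewrite sum_prod.
transitivity (\prod_(e in pairs n) (if v \in e then p * a + (1 - p) else 1)).
  by apply: eq_bigr => e _; case: ifP => _ //; rewrite mulr1 addrC subrK.
rewrite -big_mkcondr prodr_const; congr (_ ^+ _).
by apply: eq_card => e; rewrite [RHS]inE.  
Qed.

Lemma star_card n (v : 'I_n) : (#|[set e in pairs n | v \in e]| <= n)%N.
Proof.
apply: (@leq_trans #|[set [set v; u] | u : 'I_n]|).
  apply: subset_leq_card; apply/fintype.subsetP => e.
  rewrite !inE => /andP [/cards2P [x [y [xy ->]]] ve].
  apply/imsetP; move: ve; rewrite !inE => /orP [/eqP -> | /eqP ->].
    by exists y.
  by exists x => //; rewrite finset.setUC.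
by rewrite (leq_trans (leq_imset_card _ _)) // card_ord.
Qed.

Lemma ind_le (R : realType) (a t : R) (d : nat) : 1 <= a ->
  (if t < d%:R then 1 else 0) <= a ^+ d * expR (- (t * ln a)).
Proof.
move=> a1; have a0 : 0 < a by apply: lt_le_trans a1.
case: ifP => td; last by rewrite mulr_ge0 ?exprn_ge0 ?expR_ge0 // ltW.
have <- : expR (ln (a ^+ d)) = a ^+ d by apply: lnK; rewrite posrE exprn_gt0.
rewrite lnXn // -expRD -expR0 ler_expR -mulr_natr (mulrC t) -mulrBr.
by rewrite mulr_ge0 ?ln_ge0 // subr_ge0 ltW.
Qed.

Lemma Gnp_weight_ge0 (R : realType) n (p : R) (E : {set {set 'I_n}}) :
  0 <= p <= 1 -> 0 <= Gnp_weight p E.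
Proof.
by move=> /andP[p0 p1]; rewrite /Gnp_weight mulr_ge0 ?exprn_ge0 // subr_ge0.
Qed.

Lemma vertex_bound (R : realType) n (p a t : R) (v : 'I_n) :
  0 <= p <= 1 -> 1 <= a ->
  \sum_(E : {set {set 'I_n}} | E \subset pairs n)
     Gnp_weight p E * (if t < (deg E v)%:R then 1 else 0)
  <= expR (- (t * ln a)) * expR (n%:R * (p * (a - 1))).
Proof.
move=> hp a1; have /andP[p0 p1] := hp.
apply: (@le_trans _ _ (\sum_(E : {set {set 'I_n}} | E \subset pairs n)
     Gnp_weight p E * a ^+ deg E v * expR (- (t * ln a)))).
  apply: ler_sum => E _; rewrite -mulrA ler_wpM2l ?Gnp_weight_ge0 //.
  exact: ind_le.
rewrite -mulr_suml Gnp_moment mulrC ler_wpM2l ?expR_ge0 //.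
have b1 : 1 <= p * a + (1 - p).
  rewrite -subr_ge0.
  have -> : p * a + (1 - p) - 1 = p * (a - 1) by ring.
  by rewrite mulr_ge0 // subr_ge0.
apply: (@le_trans _ _ ((p * a + (1 - p)) ^+ n)).
  by apply: (ler_weXn2l b1); apply: star_card.
rewrite expRM_natl lerXn2r ?nnegrE ?expR_ge0 //; first by apply: le_trans b1.
have -> : p * a + (1 - p) = 1 + p * (a - 1) by ring.
exact: expR_ge1Dx.
Qed.

Theorem lemma11 (R : realType) (eps : R) :
  0 < eps ->
  exists c0 : R, 0 < c0 /\
    forall (n : nat) (p : R),
      0 <= p <= 1 ->
      c0 / n%:R <= p ->
      p <= (ln (n%:R : R)) ^+ 7 / n%:R ->
      9 / 10 <= Gnp_prob n p
                  (fun E => (#|high_deg ((1 + eps) * n%:R * p) E|%:R <= p^-1)).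
Proof.
move=> eps0.
pose a : R := 1 + eps / 2.
have a1 : 1 <= a by rewrite /a lerDl divr_ge0 // ltW.
have a0 : 0 < a by apply: lt_le_trans a1.
pose d : R := (1 + eps) * (1 - a^-1) - (a - 1).
have d0 : 0 < d.
  have -> : d = (eps/2)^+2 / a by rewrite /d /a; field; lra.
  by rewrite divr_gt0 // exprn_gt0 // divr_gt0.
exists (20 / d ^+ 2); split; first by rewrite divr_gt0 // exprn_gt0.
move=> n p hp hc0 hup; have /andP[p0 p1] := hp.
set t := (1 + eps) * n%:R * p.
set Q := (fun E => _).
rewrite /Gnp_prob.
have hsplit := @Gnp_total R n p.
rewrite (bigID Q) /= in hsplit.
suff : \sum_(E : {set {set 'I_n}} | (E \subset pairs n) && ~~ Q E) Gnp_weight p E <= 1/10 by lra.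
have [pp | ple0] := ltrP 0 p; last first.
  have pe : p = 0 by apply/le_anti; rewrite ple0 p0.
  have [n0 | npos] := posnP n; last first.
    have : 0 < 20 / d ^+ 2 / n%:R by rewrite !divr_gt0 ?exprn_gt0 ?ltr0n.
    lra.
  subst n.
  rewrite big1; first lra.
  move=> E /andP[_ /negP []]; rewrite /Q.
  have -> : #|high_deg t E| = 0%N.
    by apply/eqP; rewrite -leqn0 (leq_trans (max_card _)) // card_ord.
  by rewrite pe invr0.
have [n0 | npos] := posnP n.
  subst n; move: hup; rewrite invr0 mulr0; lra.
have n0R : 0 < (n%:R : R) by rewrite ltr0n.
set lam := n%:R * p.
have lam0 : 0 < lam by rewrite mulr_gt0.
have hl : 20 / d ^+ 2 <= lam.
  by rewrite /lam (mulrC n%:R) -ler_pdivrMr.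

apply: (@le_trans _ _ (\sum_(E : {set {set 'I_n}} | E \subset pairs n)
   Gnp_weight p E * (p * #|high_deg t E|%:R))).
  rewrite big_mkcondr /=; apply: ler_sum => E _.
  case: ifP => hQ; last by rewrite mulr_ge0 ?Gnp_weight_ge0 // mulr_ge0.
  rewrite ler_peMr ?Gnp_weight_ge0 //.
  move: hQ; rewrite /Q -ltNge => h.
  apply: (@le_trans _ _ (p * p^-1)); first by rewrite mulfV // lt0r_neq0.
  by rewrite ler_wpM2l // ltW.
have hc E : #|high_deg t E|%:R =
    \sum_(v : 'I_n) (if t < (deg E v)%:R then 1 else 0 : R).
  rewrite -big_mkcond /= sumr_const; congr (_ *+ _).
  by apply: eq_card => v; rewrite inE.
under eq_bigr => E _ do rewrite hc mulrCA mulr_sumr.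
rewrite -mulr_sumr exchange_big /=.
apply: (@le_trans _ _ (p * \sum_(v : 'I_n)
    (expR (- (t * ln a)) * expR (n%:R * (p * (a - 1)))))).
  rewrite ler_wpM2l //; apply: ler_sum => v _; exact: vertex_bound.
rewrite sumr_const card_ord.
have -> : p * ((expR (- (t * ln a)) * expR (n%:R * (p * (a - 1)))) *+ n) =
    lam * expR (- (t * ln a) + n%:R * (p * (a - 1))).
  by rewrite expRD /lam -mulr_natl; ring.
have hln : 1 - a^-1 <= ln a.
  have := expR_ge1Dx (ln a^-1).
  rewrite lnK ?posrE ?invr_gt0 // lnV ?posrE //; lra.
have hexp : - (t * ln a) + n%:R * (p * (a - 1)) <= - (d * lam).
  have -> : t = (1 + eps) * lam by rewrite /t /lam mulrA.
  rewrite mulrA -/lam /d.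
  have : 0 <= lam * (1 + eps) * (ln a - (1 - a^-1)).
    apply: mulr_ge0; last by rewrite subr_ge0.
    by apply: mulr_ge0; [exact: ltW | lra].
  nra.
apply: (@le_trans _ _ (lam * expR (- (d * lam)))).
  by apply: ler_wpM2l; [exact: ltW | rewrite ler_expR].
rewrite expRN ler_pdivrMr ?expR_gt0 //.
have := expR_ge1Dxn 1 (mulr_ge0 (ltW d0) (ltW lam0)).
have -> : ((1.+1)`!%:R : R) = 2 by [].
have : 20 <= lam * d ^+ 2 by rewrite -ler_pdivrMr // exprn_gt0.
move=> h1 h2.
have : 20 * lam <= lam * d ^+ 2 * lam by rewrite ler_wpM2r // ltW.
move=> h3.
have h4 : (d * lam) ^+ 2 / 2 = lam * d ^+ 2 * lam / 2 by ring.
rewrite h4 in h2.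
lra.
Qed.
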